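(* Let $T=(V,E)$ be a tree, $w:V\to\mathbb R_{\ge 0}$, and $C$ a total coloring of $V$. For every color $d\in C(V)$ let $$p^*_d=\min\{\mathrm{penalty}_{C,d}(V(T')) : T' \text{ a nonempty connected subtree of } T\}.$$ Then for every convex (total) recoloring $C'$ of $C$, $$\sum_{d\in C(V)} p^*_d\le 2\,\mathrm{cost}_C(C').$$ In particular $\sum_{d\in C(V)}p^*_d\le 2\,\mathrm{OPT}(T,C,w)$.
   Context: For a color $d$ and $U\subseteq V$, $\mathrm{penalty}_{C,d}(U)=w\big(U\setminus C^{-1}(d)\big)+w\big((V\setminus U)\cap C^{-1}(d)\big)$, where $w(X)=\sum_{v\in X}w(v)$. A coloring is convex if each color class induces a connected subtree (or is empty). $\mathrm{cost}_C(C')=w(\{v: C'(v)\neq C(v)\})$, and $\mathrm{OPT}(T,C,w)$ is the minimum of $\mathrm{cost}_C(C')$ over all convex colorings $C'$ of $T$. *)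

(* Defs.v *)
From mathcomp Require Import all_boot all_order all_algebra.
Set Implicit Arguments. Unset Strict Implicit. Unset Printing Implicit Defensive.
Import Order.TTheory GRing.Theory Num.Theory.
Local Open Scope ring_scope.

Section Defs.
Variable V : finType.

Definition simple_graph (e : rel V) : Prop := symmetric e /\ irreflexive e.

Definition acyclic (e : rel V) : Prop :=
  forall p : seq V, uniq p -> (2 < size p)%N -> ~~ cycle e p.

Definition graph_connected (e : rel V) : Prop := forall x y : V, connect e x y.

Definition is_tree (e : rel V) : Prop :=
  simple_graph e /\ graph_connected e /\ acyclic e.

(* U induces a connected subgraph (the empty set counts as connected). *)
Definition induced_connected (e : rel V) (U : {set V}) : bool :=
  [forall x in U, forall y in U,
    connect [rel a b | [&& e a b, a \in U & b \in U]] x y].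

Variable R : realFieldType.

Definition wsum (w : V -> R) (X : {set V}) : R := \sum_(v in X) w v.

Variable K : finType.

Definition penalty (C : V -> K) (w : V -> R) (d : K) (U : {set V}) : R :=
  wsum w (U :\: [set v | C v == d]) + wsum w (~: U :&: [set v | C v == d]).

Definition convex_coloring (e : rel V) (C' : V -> K) : Prop :=
  forall d : K, induced_connected e [set v | C' v == d].

Definition cost (C : V -> K) (w : V -> R) (C' : V -> K) : R :=
  wsum w [set v | C' v != C v].

(* The seed value
   penalty [set: V] is itself one of the candidates whenever V is nonempty
   (the whole tree is connected), so this is exactly the minimum. *)
Definition pstar (e : rel V) (C : V -> K) (w : V -> R) (d : K) : R :=
  \big[Num.min/penalty C w d [set: V]]_(U : {set V} |
       induced_connected e U && (U != set0)) penalty C w d U.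
End Defs.

(* Main.v *)
Require Import Defs.
Set Warnings "-all".
From mathcomp Require Import all_boot all_order all_algebra.
Import Order.TTheory GRing.Theory Num.Theory.
Local Open Scope ring_scope.

Lemma bigmin_le_any (R : realFieldType) (I : finType) (P : pred I) (F : I -> R) x0 i :
  P i -> \big[Num.min/x0]_(j | P j) F j <= F i.
Proof.
move=> Pi; rewrite -big_filter.
have : i \in filter P (index_enum I) by rewrite mem_filter Pi /= mem_index_enum.
elim: (filter P (index_enum I)) => [//|a s IH].
rewrite in_cons big_cons => /orP [/eqP <-|/IH H].
  by rewrite ge_min lexx.
by rewrite ge_min H orbT.
Qed.

Lemma wsum_sub (V : finType) (R : realFieldType) (w : V -> R) (A B : {set V}) :
  (forall v, 0 <= w v) -> A \subset B -> wsum w A <= wsum w B.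
Proof.
move=> w0 /subsetP AB; rewrite /wsum [X in X <= _]big_mkcond [X in _ <= X]big_mkcond.
apply: ler_sum => v _.
case: ifP => vA; first by rewrite (AB _ vA).
by case: ifP.
Qed.

Lemma wsum0 (V : finType) (R : realFieldType) (w : V -> R) : wsum w set0 = 0.
Proof. by rewrite /wsum big_set0. Qed.

Lemma penalty_expand (V : finType) (R : realFieldType) (K : finType)
  (w : V -> R) (C C' : V -> K) d :
  penalty C w d [set v | C' v == d] =
  \sum_v ((if (C' v == d) && (C v != d) then w v else 0) +
          (if (C' v != d) && (C v == d) then w v else 0)).
Proof.
rewrite /penalty /wsum (big_mkcond (fun v => v \in _ :\: _)) (big_mkcond (fun v => v \in _ :&: _)) -big_split /=.
by apply: eq_bigr => v _; rewrite !inE; case: (C' v == d); case: (C v == d).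
Qed.

Theorem mainTheorem3 (V : finType) (e : rel V) (R : realFieldType)
  (K : finType) (w : V -> R) (C : V -> K) :
  is_tree e ->
  (forall v, 0 <= w v) ->
  forall C' : V -> K, convex_coloring e C' ->
    \sum_(d in [set C v | v in V]) pstar e C w d <= 2 * cost C w C'.
Proof.
move=> _ w0 C' conv.
have pen0 : forall d U, 0 <= penalty C w d U.
  by move=> d U; rewrite /penalty /wsum addr_ge0 // sumr_ge0.
apply: (@le_trans _ _ (\sum_(d in [set C v | v in V])
                        penalty C w d [set v | C' v == d])).
  apply: ler_sum => d /imsetP [v _ ->].
  case: (boolP ([set x | C' x == C v] == set0)) => [/eqP E|NE].
  - apply: (@le_trans _ _ (penalty C w (C v) [set v])).
      apply: bigmin_le_any.
      apply/andP; split; last by apply/set0Pn; exists v; rewrite inE.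
      apply/forallP => x; apply/implyP; rewrite inE => /eqP ->.
      apply/forallP => y; apply/implyP; rewrite inE => /eqP ->.
      exact: connect0.
    rewrite E /penalty.
    have -> : [set v] :\: [set x | C x == C v] = set0.
      by apply/setP => x; rewrite !inE; case: (x =P v) => [->|]; rewrite ?eqxx ?andbF.
    rewrite set0D /wsum !big_set0 !add0r; apply: wsum_sub => //.
    by apply/subsetP => x; rewrite !inE => /andP [_ ->].
  - by apply: bigmin_le_any; rewrite NE andbT; apply: conv.
apply: (@le_trans _ _ (\sum_d penalty C w d [set v | C' v == d])).
  rewrite [X in _ <= X](bigID (fun d => d \in [set C v | v in V])) /=.
  by rewrite lerDl sumr_ge0.
under eq_bigr do rewrite penalty_expand.
rewrite exchange_big /= /cost /wsum mulr_sumr [in X in _ <= X]big_mkcond /=.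
apply: ler_sum => v _; rewrite inE big_split /= -!big_mkcond /=.
case: (boolP (C' v == C v)) => [/eqP E|NE].
  rewrite !big1 ?addr0 //.
    by move=> d /andP [H /eqP Cd]; move: H; rewrite -Cd E eqxx.
  by move=> d /andP [/eqP Cd H]; move: H; rewrite -Cd E eqxx.
rewrite /=.
rewrite (eq_bigl (fun d => d == C' v)); last first.
  move=> d /=; case: (d =P C' v) => [->|H]; first by rewrite eqxx eq_sym NE.
  by case: eqP => // H'; case: H; rewrite H'.
rewrite [X in _ + X](eq_bigl (fun d => d == C v)); last first.
  move=> d /=; case: (d =P C v) => [->|H]; first by rewrite eqxx NE.
  have /negbTE -> : C v != d by apply/eqP => E; case: H.
  by rewrite andbF; apply/esym/eqP.
by rewrite !big_pred1_eq mulr2n mulrDl mul1r.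
Qed.
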